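(* Let $A\to X\to Y\to B$ be a Markov chain of random variables on finite sets, $f:[0,\infty)\to\mathbb{R}$ convex with $f(1)=0$, and $G$ an increasing convex function on $[0,\infty)$. Then $I_{G,f}(A;B)\le I_{G,f}(X;Y)$.
   Context: $D_f(p\|q)=\sum_y q(y) f(p(y)/q(y))$ with $0f(0/0)=0$. $I_{G,f}(U;V)=\min_{q_V}\sum_u p_U(u)\,G(D_f(p_{V|U=u}\|q_V))$, minimum over distributions on the alphabet of $V$. *)

(* Defs.v *)
From HB Require Import structures.
From mathcomp Require Import all_boot all_order all_algebra.
From mathcomp Require Import all_classical all_reals ereal.
Set Implicit Arguments. Unset Strict Implicit. Unset Printing Implicit Defensive.
Import Order.TTheory GRing.Theory Num.Theory.
Local Open Scope classical_set_scope.
Local Open Scope ring_scope.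

Section Defs.
Variable R : realType.

Definition convex_nonneg (f : R -> R) : Prop :=
  forall x y t, 0 <= x -> 0 <= y -> 0 <= t -> t <= 1 ->
    f (t * x + (1 - t) * y) <= t * f x + (1 - t) * f y.

Definition incr_nonneg (G : R -> R) : Prop :=
  forall x y, 0 <= x -> x <= y -> G x <= G y.

(* f'(oo) = lim_{t -> oo} f(t)/t = sup_{t > 0} (f t - f 0)/t  for convex f *)
Definition fslope_inf (f : R -> R) : \bar R :=
  ereal_sup [set ((f t - f 0) / t)%:E | t in [set t : R | 0 < t]].

Definition persp (f : R -> R) (p q : R) : \bar R :=
  if 0 < q then (q * f (p / q))%:E
  else if p == 0 then 0%E else (p%:E * fslope_inf f)%E.

Definition Df {T : finType} (f : R -> R) (p q : T -> R) : \bar R :=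
  (\sum_(y : T) persp f (p y) (q y))%E.

Definition Gext (G : R -> R) (x : \bar R) : \bar R :=
  match x with
  | x%:E => (G x)%:E
  | +oo%E => +oo%E
  | -oo%E => -oo%E
  end.

Definition is_distr {T : finType} (q : T -> R) : Prop :=
  (forall t, 0 <= q t) /\ \sum_(t : T) q t = 1.

Definition marg1 {TU TV : finType} (pUV : TU -> TV -> R) (u : TU) : R :=
  \sum_(v : TV) pUV u v.

Definition cond {TU TV : finType} (pUV : TU -> TV -> R) (u : TU) : TV -> R :=
  fun v => pUV u v / marg1 pUV u.

Definition IGf {TU TV : finType} (G f : R -> R) (pUV : TU -> TV -> R) : \bar R :=
  ereal_inf [set (\sum_(u : TU | (0 < marg1 pUV u)%R)
                    (marg1 pUV u)%:E * Gext G (Df f (cond pUV u) q))%E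
            | q in [set q : TV -> R | is_distr q]].

(* Markov chain A -> X -> Y -> B : the joint pmf factors through
   stochastic kernels p(a,x,y,b) = p(a) W1(x|a) W2(y|x) W3(b|y) *)
Definition stoch {T1 T2 : finType} (W : T1 -> T2 -> R) : Prop :=
  forall t, is_distr (W t).

Definition markov4 {TA TX TY TB : finType} (P : TA -> TX -> TY -> TB -> R) : Prop :=
  exists (pA : TA -> R) (W1 : TA -> TX -> R) (W2 : TX -> TY -> R) (W3 : TY -> TB -> R),
    [/\ is_distr pA, stoch W1, stoch W2, stoch W3 &
        forall a x y b, P a x y b = pA a * W1 a x * W2 x y * W3 y b].

Definition pAB {TA TX TY TB : finType} (P : TA -> TX -> TY -> TB -> R) : TA -> TB -> R :=
  fun a b => \sum_(x : TX) \sum_(y : TY) P a x y b.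

Definition pXY {TA TX TY TB : finType} (P : TA -> TX -> TY -> TB -> R) : TX -> TY -> R :=
  fun x y => \sum_(a : TA) \sum_(b : TB) P a x y b.

End Defs.

(* Main.v *)
Require Import Defs.
From HB Require Import structures.
From mathcomp Require Import all_boot all_order all_algebra.
From mathcomp Require Import all_classical all_reals ereal.
From mathcomp Require Import ring lra.
Import Order.TTheory GRing.Theory Num.Theory.
Local Open Scope ring_scope.

Section S.
Variable R : realType.
Implicit Types (F : R -> R).

Lemma conv2 F (hF : convex_nonneg F) (q1 q2 p1 p2 : R) :
  0 < q1 -> 0 < q2 -> 0 <= p1 -> 0 <= p2 ->
  (q1 + q2) * F ((p1 + p2) / (q1 + q2)) <= q1 * F (p1 / q1) + q2 * F (p2 / q2).
Proof.
move=> q1p q2p p1p p2p.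
have Qp : 0 < q1 + q2 by clear hF; lra.
have a1 : 0 <= p1 / q1 := divr_ge0 p1p (ltW q1p).
have a2 : 0 <= p2 / q2 := divr_ge0 p2p (ltW q2p).
have a3 : 0 <= q1 / (q1 + q2) := divr_ge0 (ltW q1p) (ltW Qp).
have a4 : q1 / (q1 + q2) <= 1 by rewrite ler_pdivrMr // mul1r; lra.
have := hF (p1 / q1) (p2 / q2) (q1 / (q1 + q2)) a1 a2 a3 a4.
have -> : q1 / (q1 + q2) * (p1 / q1) + (1 - q1 / (q1 + q2)) * (p2 / q2)
   = (p1 + p2) / (q1 + q2) by field; lra.
move=> H.
rewrite -(ler_pM2l Qp) in H; apply: (le_trans H); rewrite le_eqVlt; apply/orP; left; apply/eqP.
field; lra.
Qed.

Lemma slope_le F (hF : convex_nonneg F) (r x h : R) :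
  (forall t, 0 < t -> F t - F 0 <= r * t) -> 0 <= x -> 0 <= h ->
  F (x + h) - F x <= r * h.
Proof.
move=> Hr x0 h0.
have [->|hp] := eqVneq h 0%R; first by rewrite addr0 subrr mulr0.
have {h0 hp} hp : 0 < h by rewrite lt_def hp h0.
rewrite leNgt; apply/negP => Hc.
set K := r * x - F x + F 0.
set d := h + h * (`|K| + 1) / (F (x + h) - F x - r * h).
have dpos : 0 < F (x + h) - F x - r * h by lra.
have hd : h <= d.
  have := normr_ge0 K.
  rewrite /d lerDl => ?; apply: divr_ge0; [apply: mulr_ge0; lra|lra].
have dp : 0 < d by lra.
have := hF x (x + d) (1 - h / d) x0 ltac:(lra).
have hd1 : h / d <= 1 by rewrite ler_pdivrMr // mul1r.
have hd0 : 0 <= h / d := divr_ge0 (ltW hp) (ltW dp).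
move=> /(_ ltac:(lra) ltac:(lra)).
have -> : (1 - h / d) * x + (1 - (1 - h / d)) * (x + d) = x + h by field; lra.
rewrite -(ler_pM2l dp).
have -> : d * ((1 - h / d) * F x + (1 - (1 - h / d)) * F (x + d)) =
   (d - h) * F x + h * F (x + d) by field; lra.
move=> Hconv.
have HT := Hr (x + d) ltac:(lra).
have e1 : d * (F (x + h) - F x) <= h * (F (x + d) - F x) by lra.
have e2 : d * (F (x + h) - F x - r * h) = h * (`|K| + 1) + h * (F (x + h) - F x - r * h).
  rewrite /d; field; lra.
have Kb : K <= `|K| := ler_norm K.
have e3 : h * (F (x + d) - F x) <= h * (r * (x + d) + F 0 - F x).
  by rewrite ler_pM2l //; lra.
have e4 : h * (r * (x + d) + F 0 - F x) = h * K + h * (r * d) by rewrite /K; ring.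
have e5 : d * (F (x + h) - F x) = d * (F (x + h) - F x - r * h) + h * (r * d) by ring.
have e6 : h * K <= h * `|K| by rewrite ler_pM2l.
have e7 : 0 < h * (F (x + h) - F x - r * h) by rewrite mulr_gt0.
lra.
Qed.

Lemma jensen_seq F (hF : convex_nonneg F) (I : Type) (s : seq I) (w d : I -> R) :
  (forall i, 0 <= w i) -> (forall i, 0 <= d i) ->
  let W := \sum_(i <- s) w i in
  (W = 0 -> \sum_(i <- s) w i * d i = 0 /\ \sum_(i <- s) w i * F (d i) = 0) /\
  (0 < W -> W * F ((\sum_(i <- s) w i * d i) / W) <= \sum_(i <- s) w i * F (d i)).
Proof.
move=> w0 d0; elim: s => [|i s [IH0 IH1]] /=.
  by rewrite !big_nil; split => //; rewrite ltxx.
rewrite !big_cons.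
have W'0 : 0 <= \sum_(j <- s) w j by apply: sumr_ge0.
have S'0 : 0 <= \sum_(j <- s) w j * d j by apply: sumr_ge0 => j _; apply: mulr_ge0.
have wi0 := w0 i; have di0 := d0 i.
split.
  move=> H.
  have wi : w i = 0 by lra.
  have ws : \sum_(j <- s) w j = 0 by lra.
  have [-> ->] := IH0 ws.
  by rewrite wi !mul0r !addr0.
move=> Wp.
have [ws|wsp] := eqVneq (\sum_(j <- s) w j) 0.
  have [-> ->] := IH0 ws.
  rewrite ws !addr0 in Wp *.
  by rewrite [w i * d i]mulrC mulfK ?gt_eqF.
have {wsp} wsp : 0 < \sum_(j <- s) w j by rewrite lt_def wsp W'0.
have IH := IH1 wsp.
set W' := \sum_(j <- s) w j in W'0 wsp IH *.
set S' := \sum_(j <- s) w j * d j in S'0 IH *.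
set T' := \sum_(j <- s) w j * F (d j) in IH *.
have Qp : 0 < w i + W' by lra.
have a2 : 0 <= S' / W' := divr_ge0 S'0 (ltW wsp).
have a3 : 0 <= w i / (w i + W') := divr_ge0 wi0 (ltW Qp).
have a4 : w i / (w i + W') <= 1 by rewrite ler_pdivrMr // mul1r; lra.
have := hF (d i) (S' / W') (w i / (w i + W')) di0 a2 a3 a4.
have -> : w i / (w i + W') * d i + (1 - w i / (w i + W')) * (S' / W')
   = (w i * d i + S') / (w i + W') by field; lra.
move=> H.
rewrite -(ler_pM2l Qp) in H; apply: (le_trans H).
have -> : (w i + W') * (w i / (w i + W') * F (d i) + (1 - w i / (w i + W')) * F (S' / W'))
  = w i * F (d i) + W' * F (S' / W') by field; lra.
by rewrite lerD2l.
Qed.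

Lemma jensen_fin F (hF : convex_nonneg F) (I : finType) (w d : I -> R) :
  (forall i, 0 <= w i) -> (forall i, 0 <= d i) -> \sum_i w i = 1 ->
  F (\sum_i w i * d i) <= \sum_i w i * F (d i).
Proof.
move=> w0 d0 w1.
have [_ /(_ ltac:(rewrite w1; lra))] := @jensen_seq F hF I (index_enum I) w d w0 d0.
by rewrite w1 mul1r divr1.
Qed.

Section Persp.
Variable f : R -> R.
Hypothesis hf : convex_nonneg f.
Local Notation s := (fslope_inf f).
Local Open Scope ereal_scope.

Lemma s_ub (t : R) : (0 < t)%R -> ((f t - f 0) / t)%:E <= s.
Proof. by move=> tp; apply: ereal_sup_ubound; exists t. Qed.

Lemma s_ninf : s != -oo.
Proof.
have := @s_ub 1%R ltr01; case: s => //.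
Qed.

Lemma persp00 : persp f 0 0 = 0.
Proof. by rewrite /persp ltxx eqxx. Qed.

Lemma persp0 (p : R) : (0 <= p)%R -> persp f p 0 = p%:E * s.
Proof.
move=> p0; rewrite /persp ltxx; case: eqP => [->|//].
by rewrite mul0e.
Qed.

Lemma persp_pos (p q : R) : (0 < q)%R -> persp f p q = (q * f (p / q))%:E.
Proof. by move=> qp; rewrite /persp qp. Qed.

Lemma persp_ninf (p q : R) : (0 <= p)%R -> (0 <= q)%R -> persp f p q != -oo.
Proof.
move=> p0 q0; have [qz|qp] := eqVneq q 0%R.
  rewrite qz persp0 //; have [->|pp] := eqVneq p 0%R; first by rewrite mul0e.
  have pp' : (0 < p)%R by rewrite lt_def pp p0.
  move: s_ninf; case: s => [r||] //= _.
  by rewrite muleC gt0_mulye // lte_fin.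
have qp' : (0 < q)%R by rewrite lt_def qp q0.
by rewrite persp_pos.
Qed.

Lemma persp_hom (c p q : R) : (0 <= c)%R -> (0 <= p)%R -> (0 <= q)%R ->
  persp f (c * p) (c * q) = c%:E * persp f p q.
Proof.
move=> c0 p0 q0; have [->|cp] := eqVneq c 0%R.
  by rewrite !mul0r persp00 mul0e.
have cp' : (0 < c)%R by rewrite lt_def cp c0.
have [->|qp] := eqVneq q 0%R.
  by rewrite mulr0 !persp0 ?mulr_ge0 // EFinM muleA.
have qp' : (0 < q)%R by rewrite lt_def qp q0.
rewrite !persp_pos ?mulr_gt0 // -EFinM; congr (_%:E).
rewrite invfM mulrACA mulfV ?gt_eqF // mul1r; ring.
Qed.

Lemma persp_mixed (p1 p2 q1 : R) : (0 < q1)%R -> (0 <= p1)%R -> (0 <= p2)%R ->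
  persp f (p1 + p2) q1 <= persp f p1 q1 + p2%:E * s.
Proof.
move=> q1p p10 p20; rewrite !persp_pos //.
have [->|p2p] := eqVneq p2 0%R; first by rewrite mul0e addr0 adde0.
have p2p' : (0 < p2)%R by rewrite lt_def p2p p20.
move: s_ninf (s_ub); case: s => [r||] // _ Hub; last first.
  by rewrite muleC gt0_mulye ?lte_fin // addey // ?leey.
rewrite -EFinM -EFinD lee_fin.
have Hr : forall t, (0 < t)%R -> (f t - f 0 <= r * t)%R.
  move=> t tp; have := Hub t tp; rewrite lee_fin ler_pdivrMr //.
have := @slope_le f hf r (p1 / q1) (p2 / q1) Hr (divr_ge0 p10 (ltW q1p))
   (divr_ge0 p20 (ltW q1p)).
have -> : (p1 / q1 + p2 / q1 = (p1 + p2) / q1)%R by rewrite mulrDl.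
move=> H; rewrite -(ler_pM2l q1p) in H.
have e : (q1 * (r * (p2 / q1)) = p2 * r)%R by field; rewrite gt_eqF.
rewrite e in H.
have e2 : (q1 * (f ((p1 + p2) / q1) - f (p1 / q1)) =
   q1 * f ((p1 + p2) / q1) - q1 * f (p1 / q1))%R by ring.
rewrite e2 in H; lra.
Qed.

Lemma persp_sub (p1 p2 q1 q2 : R) : (0 <= p1)%R -> (0 <= p2)%R -> (0 <= q1)%R -> (0 <= q2)%R ->
  persp f (p1 + p2) (q1 + q2) <= persp f p1 q1 + persp f p2 q2.
Proof.
move=> p10 p20 q10 q20.
have [q1z|q1n] := eqVneq q1 0%R; have [q2z|q2n] := eqVneq q2 0%R.
- rewrite q1z q2z addr0 !persp0 ?addr_ge0 // EFinD ge0_muleDl // lee_fin.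
- have q2p : (0 < q2)%R by rewrite lt_def q2n q20.
  rewrite q1z add0r persp0 // addrC addeC; exact: persp_mixed.
- have q1p : (0 < q1)%R by rewrite lt_def q1n q10.
  rewrite q2z addr0 persp0 //; exact: persp_mixed.
have q1p : (0 < q1)%R by rewrite lt_def q1n q10.
have q2p : (0 < q2)%R by rewrite lt_def q2n q20.
rewrite !persp_pos ?addr_gt0 // -EFinD lee_fin; exact: conv2.
Qed.

Lemma persp_sum (I : Type) (r : seq I) (p q : I -> R) :
  (forall i, 0 <= p i)%R -> (forall i, 0 <= q i)%R ->
  persp f (\sum_(i <- r) p i) (\sum_(i <- r) q i) <= \sum_(i <- r) persp f (p i) (q i).
Proof.
move=> p0 q0; elim: r => [|i r IH]; first by rewrite !big_nil persp00.
rewrite !big_cons; apply: le_trans (leeD (lexx _) IH).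
by apply: persp_sub => //; apply: sumr_ge0.
Qed.

End Persp.

Local Open Scope ereal_scope.

Lemma adde_nn (x y : \bar R) : x != -oo -> y != -oo -> x + y != -oo.
Proof. by case: x => [?||] //; case: y. Qed.

Lemma addedef_nn (x y : \bar R) : x != -oo -> y != -oo -> x +? y.
Proof. by case: x => [?||] //; case: y. Qed.

Lemma mule_nn (c : R) (e : \bar R) : (0 <= c)%R -> e != -oo -> c%:E * e != -oo.
Proof.
move=> c0; have [->|cn] := eqVneq c 0%R; first by rewrite mul0e.
have cp : (0 < c)%R by rewrite lt_def cn c0.
by case: e => [r||] //= _; rewrite muleC gt0_mulye ?lte_fin.
Qed.

Lemma sume_nn (I : Type) (r : seq I) (P : pred I) (F : I -> \bar R) :
  (forall i, P i -> F i != -oo) -> \sum_(i <- r | P i) F i != -oo.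
Proof.
move=> H; elim/big_ind: _ => //; exact: adde_nn.
Qed.

Lemma Gext_nn (G : R -> R) e : e != -oo -> Gext G e != -oo.
Proof. by case: e. Qed.

Lemma Gext_mono (G : R -> R) (hG : incr_nonneg G) (e1 e2 : \bar R) :
  0 <= e1 -> e1 <= e2 -> Gext G e1 <= Gext G e2.
Proof.
case: e2 => [r2||]; last 2 first.
- by move=> _ _; rewrite leey.
- by case: e1.
case: e1 => [r1||] // => h1 h2; rewrite /= lee_fin; apply: hG; by rewrite -lee_fin.
Qed.

Lemma jensen_ext (G : R -> R) (hG : convex_nonneg G) (I : finType)
   (w : I -> R) (d : I -> \bar R) :
  (forall i, 0 <= w i)%R -> (forall i, 0 <= d i) -> (\sum_i w i = 1)%R ->
  Gext G (\sum_i (w i)%:E * d i) <= \sum_i (w i)%:E * Gext G (d i).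
Proof.
move=> w0 d0 w1.
case: (pselect (exists i, (0 < w i)%R /\ d i = +oo)) => [[i [wi di]]|Hn].
  rewrite [X in _ <= X](bigD1 i) //= di /= muleC gt0_mulye ?lte_fin // addye ?leey //.
  apply: sume_nn => j _; apply: mule_nn => //; apply: Gext_nn.
  by move: (d0 j); case: (d j).
have H1 : forall i, (w i)%:E * d i = (w i * fine (d i))%:E /\
                    (w i)%:E * Gext G (d i) = (w i * G (fine (d i)))%:E.
  move=> i; have [wz|wn] := eqVneq (w i) 0%R.
    by rewrite wz !mul0e !mul0r.
  have wp : (0 < w i)%R by rewrite lt_def wn w0.
  move: (d0 i); case E: (d i) => [r||] //= _.
  by exfalso; apply: Hn; exists i.
under eq_bigr do rewrite (H1 _).1.
under [X in _ <= X]eq_bigr do rewrite (H1 _).2.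
rewrite !sumEFin /= lee_fin.
apply: jensen_fin => // i.
by move: (d0 i); case: (d i) => [r||] //=; rewrite lee_fin.
Qed.

Lemma Df_ge0 (f : R -> R) (hf : convex_nonneg f) (f1 : f 1%R = 0%R) (T : finType) (p q : T -> R) :
  (forall t, 0 <= p t)%R -> (forall t, 0 <= q t)%R -> (\sum_t p t = 1)%R -> (\sum_t q t = 1)%R ->
  0 <= Df f p q.
Proof.
move=> p0 q0 p1 q1; rewrite /Df.
apply: le_trans (@persp_sum f hf _ _ _ _ p0 q0).
by rewrite p1 q1 persp_pos // divr1 f1 mulr0.
Qed.


Lemma dpi (f : R -> R) (hf : convex_nonneg f) (TX TY TB : finType) (w : TX -> R)
  (W2 : TX -> TY -> R) (W3 : TY -> TB -> R) (q : TY -> R) :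
  (forall x, 0 <= w x)%R -> (forall x y, 0 <= W2 x y)%R -> (forall y b, 0 <= W3 y b)%R ->
  (forall y, 0 <= q y)%R -> (\sum_x w x = 1)%R -> (forall y, \sum_b W3 y b = 1)%R ->
  Df f (fun b => \sum_x \sum_y w x * W2 x y * W3 y b)%R (fun b => \sum_y q y * W3 y b)%R
  <= \sum_x (w x)%:E * Df f (W2 x) q.
Proof.
move=> w0 W20 W30 q0 w1 W31; rewrite /Df.
have eq_q : forall b, (\sum_y q y * W3 y b = \sum_x \sum_y (w x * W3 y b) * q y)%R.
  move=> b; rewrite -[LHS]mul1r -w1 big_distrl /=; apply: eq_bigr => x _.
  rewrite big_distrr /=; apply: eq_bigr => y _; ring.
have eq_p : forall b, (\sum_x \sum_y w x * W2 x y * W3 y b =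
                        \sum_x \sum_y (w x * W3 y b) * W2 x y)%R.
  by move=> b; apply: eq_bigr => x _; apply: eq_bigr => y _; ring.
apply: (@le_trans _ _ (\sum_b \sum_x \sum_y (w x * W3 y b)%:E * persp f (W2 x y) (q y))).
  apply: lee_sum => b _; rewrite eq_q eq_p.
  apply: le_trans (@persp_sum f hf _ _ _ _ _ _) _.
  - by move=> x; apply: sumr_ge0 => y _; apply: mulr_ge0 => //; apply: mulr_ge0.
  - by move=> x; apply: sumr_ge0 => y _; apply: mulr_ge0 => //; apply: mulr_ge0.
  apply: lee_sum => x _.
  apply: le_trans (@persp_sum f hf _ _ _ _ _ _) _.
  - by move=> y; apply: mulr_ge0 => //; apply: mulr_ge0.
  - by move=> y; apply: mulr_ge0 => //; apply: mulr_ge0.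
  apply: lee_sum => y _; rewrite persp_hom //; apply: mulr_ge0 => //.
rewrite le_eqVlt; apply/orP; left; apply/eqP.
rewrite exchange_big; apply: eq_bigr => x _; rewrite exchange_big /=.
rewrite fin_num_sume_distrr //; last first.
  by move=> y1 y2 _ _; apply: addedef_nn; apply: persp_ninf.
apply: eq_bigr => y _.
under eq_bigr do rewrite EFinM -muleA.
rewrite -fin_num_sume_distrr //; last first.
  by move=> b1 b2 _ _; apply: addedef_nn; apply: mule_nn => //; apply: persp_ninf.
rewrite -ge0_sume_distrl; last by move=> b _; rewrite lee_fin.
by rewrite sumEFin W31 mul1e.
Qed.

End S.

Section Main.
Local Open Scope ereal_scope.

Lemma lemma3_aux (R : realType) (TA TX TY TB : finType)
    (P : TA -> TX -> TY -> TB -> R) (f G : R -> R) :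
  markov4 P ->
  convex_nonneg f -> f 1%R = 0%R ->
  convex_nonneg G -> incr_nonneg G ->
  (IGf G f (pAB P) <= IGf G f (pXY P))%E.
Proof.
move=> [pA [W1 [W2 [W3 [[pA0 pA1] W1s W2s W3s HP]]]]] hf f1 hG hGi.
pose px := fun x => (\sum_a pA a * W1 a x)%R.
pose V := fun a b => (\sum_x \sum_y W1 a x * W2 x y * W3 y b)%R.
have W10 : forall a x, (0 <= W1 a x)%R by move=> a x; case: (W1s a).
have W20 : forall x y, (0 <= W2 x y)%R by move=> x y; case: (W2s x).
have W30 : forall y b, (0 <= W3 y b)%R by move=> y b; case: (W3s y).
have W11 : forall a, (\sum_x W1 a x = 1)%R by move=> a; case: (W1s a).
have W21 : forall x, (\sum_y W2 x y = 1)%R by move=> x; case: (W2s x).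
have W31 : forall y, (\sum_b W3 y b = 1)%R by move=> y; case: (W3s y).
have px0 : forall x, (0 <= px x)%R.
  by move=> x; apply: sumr_ge0 => a _; apply: mulr_ge0.
have V0 : forall a b, (0 <= V a b)%R.
  by move=> a b; apply: sumr_ge0 => x _; apply: sumr_ge0 => y _; rewrite mulr_ge0 ?mulr_ge0.
have hXY : forall x y, pXY P x y = (px x * W2 x y)%R.
  move=> x y; rewrite /pXY /px big_distrl /=; apply: eq_bigr => a _.
  under eq_bigr do rewrite HP.
  by rewrite -big_distrr /= W31 mulr1.
have hmX : forall x, marg1 (pXY P) x = px x.
  by move=> x; rewrite /marg1; under eq_bigr do rewrite hXY; rewrite -big_distrr /= W21 mulr1.
have hcX : forall x, (0 < px x)%R -> cond (pXY P) x = W2 x.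
  move=> x hx; apply: funext => y; rewrite /cond hmX hXY.
  by rewrite mulrC mulKf ?gt_eqF.
have hAB : forall a b, pAB P a b = (pA a * V a b)%R.
  move=> a b; rewrite /pAB /V big_distrr; apply: eq_bigr => x _.
  rewrite big_distrr; apply: eq_bigr => y _; rewrite HP /=; ring.
have Vsum : forall a, (\sum_b V a b = 1)%R.
  move=> a; rewrite /V exchange_big /= -(W11 a); apply: eq_bigr => x _.
  rewrite exchange_big /= -[RHS]mulr1 -(W21 x) big_distrr /=; apply: eq_bigr => y _.
  by rewrite -big_distrr /= W31 mulr1.
have hmA : forall a, marg1 (pAB P) a = pA a.
  by move=> a; rewrite /marg1; under eq_bigr do rewrite hAB; rewrite -big_distrr /= Vsum mulr1.
have hcA : forall a, (0 < pA a)%R -> cond (pAB P) a = V a.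
  move=> a ha; apply: funext => b; rewrite /cond hmA hAB.
  by rewrite mulrC mulKf ?gt_eqF.
rewrite /IGf; apply: le_ereal_inf_tmp => _ [q [q0 q1] <-].
pose q' := fun b => (\sum_y q y * W3 y b)%R.
have q'0 : forall b, (0 <= q' b)%R.
  by move=> b; apply: sumr_ge0 => y _; apply: mulr_ge0.
have q'1 : (\sum_b q' b = 1)%R.
  rewrite /q' exchange_big /= -q1; apply: eq_bigr => y _.
  by rewrite -big_distrr /= W31 mulr1.
apply: le_trans (ereal_inf_lbound _) _.
  by exists q'.
rewrite (eq_bigl (fun a => (0 < pA a)%R)); last by move=> a; rewrite hmA.
rewrite (eq_bigr (fun a => (pA a)%:E * Gext G (Df f (V a) q'))); last first.
  by move=> a Ha; rewrite hmA hcA.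
rewrite [X in _ <= X](eq_bigl (fun x => (0 < px x)%R)); last by move=> x; rewrite hmX.
rewrite [X in _ <= X](eq_bigr (fun x => (px x)%:E * Gext G (Df f (W2 x) q))); last first.
  by move=> x Hx; rewrite hmX hcX.
pose D := fun x => Df f (W2 x) q.
have D0 : forall x, 0 <= D x.
  by move=> x; apply: Df_ge0 => //.
have GDn : forall x, Gext G (D x) != -oo.
  by move=> x; apply: Gext_nn; move: (D0 x); case: (D x).
have step : forall a, (0 < pA a)%R ->
   Gext G (Df f (V a) q') <= \sum_(x | (0 < px x)%R) (W1 a x)%:E * Gext G (D x).
  move=> a ha.
  have -> : \sum_(x | (0 < px x)%R) (W1 a x)%:E * Gext G (D x) =
            \sum_x (W1 a x)%:E * Gext G (D x).
    rewrite big_mkcond; apply: eq_bigr => x _; case: ifP => // hx.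
    have : (pA a * W1 a x <= px x)%R.
      rewrite /px (bigD1 a) //= lerDl; apply: sumr_ge0 => a' _; exact: mulr_ge0.
    have [->|hw] := eqVneq (W1 a x) 0%R; first by rewrite mul0e.
    have hw' : (0 < W1 a x)%R by rewrite lt_def hw W10.
    move=> hle; exfalso; move/negbT: hx; rewrite -leNgt => hx.
    have : (0 < pA a * W1 a x)%R by apply: mulr_gt0.
    have := le_trans hle hx; rewrite leNgt => /negP; done.
  apply: (le_trans _ (@jensen_ext _ G hG _ _ _ (W10 a) D0 (W11 a))).
  apply: Gext_mono => //.
    by apply: Df_ge0 => //.
  exact: (@dpi _ f hf).
apply: (@le_trans _ _ (\sum_(a | (0 < pA a)%R) (pA a)%:E *
     \sum_(x | (0 < px x)%R) (W1 a x)%:E * Gext G (D x))).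
  apply: lee_sum => a ha; apply: lee_wpmul2l; first by rewrite lee_fin.
  exact: step.
rewrite le_eqVlt; apply/orP; left; apply/eqP.
rewrite (eq_bigr (fun a => \sum_(x | (0 < px x)%R) (pA a * W1 a x)%:E * Gext G (D x))); last first.
  move=> a _; rewrite (@fin_num_sume_distrr R TX (index_enum TX) _ (fun x => (0 < px x)%R)) //.
    by apply: eq_bigr => x _; rewrite EFinM muleA.
  by move=> x1 x2 _ _; apply: addedef_nn; apply: mule_nn.
rewrite exchange_big /=; apply: eq_bigr => x _.
rewrite -ge0_sume_distrl; last by move=> a _; rewrite lee_fin mulr_ge0.
rewrite sumEFin; congr (_%:E * _).
rewrite /px big_mkcond; apply: eq_bigr => a _; case: ifP => // /negbT.
rewrite -leNgt => h; have -> : pA a = 0%R by apply/le_anti; rewrite h pA0.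
by rewrite mul0r.
Qed.
End Main.

Theorem lemma3 (R : realType) (TA TX TY TB : finType)
    (P : TA -> TX -> TY -> TB -> R) (f G : R -> R) :
  markov4 P ->
  convex_nonneg f -> f 1 = 0 ->
  convex_nonneg G -> incr_nonneg G ->
  (IGf G f (pAB P) <= IGf G f (pXY P))%E.
Proof. exact: lemma3_aux. Qed.
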